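(* Let $f\in\mathbb{Z}[X]$ be a monic polynomial irreducible over $\mathbb{Q}$. Then every Vandermonde cut-and-project scheme corresponding to $f$ is generic.
   Context: Let $f$ have degree $d$ and (distinct) roots $\beta_1,\dots,\beta_d$, and set $\mathbf{z}_j=(1,\beta_j,\beta_j^2,\dots,\beta_j^{d-1})^\top$. The elementary real subspaces are $\mathrm{span}_\mathbb{R}\{\mathbf{z}_j\}$ for real $\beta_j$ and $\mathrm{span}_\mathbb{R}\{\mathrm{Re}\,\mathbf{z}_j,\mathrm{Im}\,\mathbf{z}_j\}$ for non-real $\beta_j$ (real and imaginary parts taken componentwise). A Vandermonde cut-and-project scheme corresponding to $f$ is obtained as follows: write $\mathbb{R}^d=\mathcal{Y}_1\oplus\mathcal{Y}_2$ where each $\mathcal{Y}_i$ is a direct sum of some of the elementary subspaces, $\dim\mathcal{Y}_1=n$, $1\le n<d$; let $Y_1\in\mathbb{R}^{d\times n}$, $Y_2\in\mathbb{R}^{d\times(d-n)}$ be matrices whose columns are the corresponding vectors $\mathbf{z}_j$ or pairs $\mathrm{Re}\,\mathbf{z}_j,\mathrm{Im}\,\mathbf{z}_j$ spanning $\mathcal{Y}_1$, $\mathcal{Y}_2$; set $Y=(Y_1,Y_2)$, $L=Y^{-1}$ and $\mathcal{L}=\{L\mathbf{r}:\mathbf{r}\in\mathbb{Z}^d\}$. The scheme is $(\mathcal{L}\subset\mathbb{R}^d,\mathbb{R}^n)$ with projections $\pi_\parallel(\mathbf{x})=(x_1,\dots,x_n)^\top$, $\pi_\perp(\mathbf{x})=(x_{n+1},\dots,x_d)^\top$.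 Such a scheme is generic if $\pi_\parallel|_{\mathcal{L}}$ and $\pi_\perp|_{\mathcal{L}}$ are injective and $\pi_\perp(\mathcal{L})$ is dense in $\mathbb{R}^{d-n}$. *)

(* Defs.v *)
From HB Require Import structures.
From mathcomp Require Import all_boot all_order all_algebra.
From mathcomp Require Import all_classical all_reals all_analysis.
From mathcomp Require complex.
Import complex.ComplexEqChoice complex.ComplexField.
Set Implicit Arguments.
Unset Strict Implicit.
Unset Printing Implicit Defensive.
Import Order.TTheory GRing.Theory Num.Theory.
Import numFieldNormedType.Exports.
Local Open Scope ring_scope.
Local Open Scope classical_set_scope.

Notation Cx R := (complex.complex R).

(* Throughout, d = n + m is the degree of f, with n = dim Y_1 and m = dim Y_2.
   Vectors of R^d are column vectors 'cV[R]_(n+m); pi_par = usubmx (first n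
   coordinates) and pi_perp = dsubmx (last m coordinates). *)

(* Column k of Y is  Re z_(r k)  (if im k = false) or  Im z_(r k) (if im k = true),
   where z_j = (1, beta_j, ..., beta_j^(d-1))^T.  The conditions say:
   - distinct columns carry distinct labels (r k, im k);
   - an Im-column only occurs for a non-real root;
   - for each conjugate pair only one representative root is used;
   - the two columns Re z_j, Im z_j of a pair lie in the same block
     (both among the first n columns, i.e. in Y_1, or both in Y_2).
   Since there are d = n + m columns, a counting argument shows the columns are
   exactly: z_j for each real root, and Re z_j, Im z_j for one representative of
   each non-real conjugate pair; i.e. Y_1 (first n columns) and Y_2 (last m
   columns) span complementary direct sums of elementary real subspaces. *)
Definition vandermonde_Y (R : realType) (n m : nat)
    (beta : 'I_(n + m) -> Cx R) (Y : 'M[R]_(n + m)) : Prop :=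
  exists (r : 'I_(n + m) -> 'I_(n + m)) (im : 'I_(n + m) -> bool),
    [/\ forall (i k : 'I_(n + m)),
          Y i k = (if im k then complex.Im (beta (r k) ^+ i)
                           else complex.Re (beta (r k) ^+ i)),
        injective (fun k => (r k, im k)),
        forall k, im k -> complex.Im (beta (r k)) != 0,
        forall k k', beta (r k') = complex.conjc (beta (r k)) -> r k' = r k &
        forall k k', r k = r k' -> (k < n)%N = (k' < n)%N].

Definition cp_lattice (R : realType) (d : nat) (L : 'M[R]_d) : set 'cV[R]_d :=
  [set L *m map_mx (fun z : int => z%:~R) v | v in [set: 'cV[int]_d]].

Definition generic_scheme (R : realType) (n m : nat) (L : 'M[R]_(n + m)) : Prop :=
  [/\ {in cp_lattice L &, injective (fun x : 'cV[R]_(n + m) => usubmx x)},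
      {in cp_lattice L &, injective (fun x : 'cV[R]_(n + m) => dsubmx x)} &
      dense [set dsubmx x | x in cp_lattice L]].

(* Main.v *)
Require Import Defs.
From HB Require Import structures.
From mathcomp Require Import all_boot all_order all_algebra.
From mathcomp Require Import all_classical all_reals all_analysis.
From mathcomp Require complex.
From mathcomp Require Import zify ring lra.
Import complex complex.ComplexEqChoice complex.ComplexField.
Import Order.TTheory GRing.Theory Num.Theory.
Import numFieldNormedType.Exports.
Local Open Scope ring_scope.
Set Implicit Arguments.
Unset Strict Implicit.
Unset Printing Implicit Defensive.

Definition compmx (F : nzRingType) (d : nat) (p : {poly F}) : 'M[F]_d :=
  \matrix_(i, j) if (i : nat) == d.-1 then - p`_j else ((i.+1 == j)%N)%:R.
Definition krylov (F : nzRingType) (d : nat) (C : 'M[F]_d) (s : 'cV[F]_d) : 'M[F]_d :=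
  \matrix_(j, i) (iter i (mulmx C) s) j 0.
Definition rowp (F : nzRingType) (d : nat) (q : {poly F}) : 'rV[F]_d := \row_i q`_i.

Lemma map_compmx (A B : nzRingType) (phi : {rmorphism A -> B}) d (p : {poly A}) :
  map_mx phi (compmx d p) = compmx d (map_poly phi p).
Proof.
apply/matrixP => i j; rewrite !mxE coef_map; case: ifP => _; first by rewrite rmorphN.
by rewrite rmorph_nat.
Qed.

Lemma map_iter (A B : nzRingType) (phi : {rmorphism A -> B}) d (C : 'M[A]_d) (s : 'cV[A]_d) i :
  map_mx phi (iter i (mulmx C) s) = iter i (mulmx (map_mx phi C)) (map_mx phi s).
Proof. by elim: i => //= i IH; rewrite map_mxM IH. Qed.

Lemma map_krylov (A B : nzRingType) (phi : {rmorphism A -> B}) d (C : 'M[A]_d) (s : 'cV[A]_d) :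
  map_mx phi (krylov C s) = krylov (map_mx phi C) (map_mx phi s).
Proof. by apply/matrixP => i j; rewrite !mxE -map_iter mxE. Qed.

Section Companion.
Variable F : fieldType.
Variable d : nat.
Local Notation rowp := (@rowp F d).

Lemma rowp_comp (p q : {poly F}) : (0 < d)%N -> p \is monic -> size p = d.+1 ->
  (size q <= d)%N -> rowp q *m compmx d p = rowp ((q * 'X) %% p).
Proof.
move=> d0 mp sp sq.
have pd : p`_d = 1 by move: mp; rewrite monicE /lead_coef sp => /eqP.
set r := q * 'X - (q`_d.-1)%:P * p.
have -> : (q * 'X) %% p = r.
  have -> : q * 'X = (q`_d.-1)%:P * p + r by rewrite /r addrC subrK.
  rewrite modp_addl_mul_small // sp ltnS.
  apply/leq_sizeP => j dj; rewrite /r coefB coefMX coefCM.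
  case: (ltngtP d j) => [dlt|jd|<-].
  - have -> : p`_j = 0 by apply: nth_default; rewrite sp.
    rewrite mulr0 subr0; case: j dlt {dj} => // j dlt /=.
    by apply: nth_default; apply: leq_trans sq _; rewrite -ltnS.
  - by move: jd; rewrite ltnNge dj.
  - by rewrite pd mulr1 (negbTE (lt0n_neq0 d0)) subrr.
apply/rowP => j; rewrite !mxE /r coefB coefMX coefCM.
have i0lt : (d.-1 < d)%N by rewrite ltn_predL.
pose i0 : 'I_d := Ordinal i0lt.
rewrite (bigD1 i0) //= !mxE eqxx /=.
rewrite (eq_bigr (fun i : 'I_d => q`_i * ((i.+1 == j)%N)%:R)); last first.
  move=> i ni; rewrite !mxE.
  have -> : ((i : nat) == d.-1) = false by apply/negbTE; apply: contra ni => /eqP h; apply/eqP/val_inj.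
  done.
rewrite addrC mulrN; congr (_ - _).
case: (nat_of_ord j) (ltn_ord j) => [|j'] jlt /=.
  by rewrite big1 // => i _; rewrite mulr0.
have j'd : (j' < d)%N by apply: ltnW.
rewrite (bigD1 (Ordinal j'd)) /=; last first.
  by apply/eqP => /(congr1 val) /= h; move: jlt; rewrite h -(prednK d0) ltnn.
rewrite eqxx mulr1 big1 ?addr0 // => i /andP [_ ni].
have -> : (i.+1 == j'.+1)%N = false.
  by rewrite eqSS; apply/negbTE; apply: contra ni => /eqP h; apply/eqP/val_inj.
by rewrite mulr0.
Qed.


Lemma rowp_iter (p q : {poly F}) (s : 'cV[F]_d) i : (0 < d)%N -> p \is monic ->
  size p = d.+1 ->
  rowp (q %% p) *m iter i (mulmx (compmx d p)) s = rowp ((q * 'X^i) %% p) *m s.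
Proof.
move=> d0 mp sp; elim: i q => [|i IH] q; first by rewrite /= expr0 mulr1.
have p0 : p != 0 by apply/eqP => p0; move: sp; rewrite p0 size_poly0.
rewrite iterS mulmxA rowp_comp //; last by rewrite -ltnS -sp ltn_modp.
by rewrite mulrC modp_mul mulrC IH exprS mulrA.
Qed.

Lemma modp_sumF (p : {poly F}) (I : finType) (P : I -> {poly F}) :
  (\sum_i P i) %% p = \sum_i (P i %% p).
Proof. exact: (big_morph (fun q => q %% p) (modpD p) (mod0p p)). Qed.

Lemma rowp_lin (I : finType) (a : I -> F) (P : I -> {poly F}) :
  rowp (\sum_i a i *: P i) = \sum_i a i *: rowp (P i).
Proof.
by apply/rowP => j; rewrite !mxE coef_sum summxE; apply: eq_bigr => i _; rewrite !mxE coefZ.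
Qed.

Lemma krylov_mul (C : 'M[F]_d) (s : 'cV[F]_d) (g : 'cV[F]_d) :
  krylov C s *m g = \sum_i g i 0 *: iter i (mulmx C) s.
Proof.
apply/colP => j; rewrite !mxE summxE; apply: eq_bigr => i _; rewrite !mxE mulrC.
done.
Qed.

Lemma krylov_unit (p : {poly F}) (s : 'cV[F]_d) : (0 < d)%N -> p \is monic ->
  size p = d.+1 -> irreducible_poly p -> s != 0 -> krylov (compmx d p) s \in unitmx.
Proof.
move=> d0 mp sp ip s0; apply/negPn/negP => nu.
have p0 : p != 0 by apply/eqP => p0; move: sp; rewrite p0 size_poly0.
have : kermx (krylov (compmx d p) s)^T != 0.
  by rewrite kermx_eq0 row_free_unit unitmx_tr.
move=> /eqP kn0.
have [i0 ri0] : exists i0, row i0 (kermx (krylov (compmx d p) s)^T) != 0.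
  apply/existsP; apply: contraT; rewrite negb_exists => /forallP al.
  exfalso; apply: kn0; apply/row_matrixP => i; rewrite row0; apply/eqP; move: (al i); by rewrite negbK.
set g := (row i0 (kermx (krylov (compmx d p) s)^T))^T.
have Sg : krylov (compmx d p) s *m g = 0.
  apply: trmx_inj; rewrite trmx_mul trmxK trmx0 -row_mul.
  by rewrite mulmx_ker row0.
set pg := \sum_(i < d) g i 0 *: 'X^i.
have coefpg : forall j : 'I_d, pg`_j = g j 0.
  move=> j; rewrite coef_sum (bigD1 j) //= coefZ coefXn eqxx mulr1 big1 ?addr0 // => i ni.
  by rewrite coefZ coefXn; move: ni; rewrite eq_sym -val_eqE => /negbTE ->; rewrite mulr0.
have spg : (size pg <= d)%N.
  apply/leq_sizeP => j dj; rewrite coef_sum big1 // => i _.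
  rewrite coefZ coefXn; have -> : (j == i)%N = false by apply/negbTE; rewrite neq_ltn (leq_trans (ltn_ord i) dj) orbT.
  by rewrite mulr0.
have key : forall q, rowp ((q * pg) %% p) *m s = 0.
  move=> q; rewrite -[RHS](mulmx0 _ (rowp (q %% p))) -Sg krylov_mul.
  rewrite /pg mulr_sumr; under eq_bigr do rewrite -scalerAr.
  rewrite modp_sumF; under eq_bigr do rewrite modpZl.
  rewrite rowp_lin mulmx_suml mulmx_sumr; apply: eq_bigr => i _.
  by rewrite -scalemxAl -scalemxAr rowp_iter.
have pg0 : pg != 0.
  apply: contra ri0 => /eqP pg0; apply/eqP; apply: trmx_inj; rewrite trmx0.
  apply/colP => j; rewrite mxE.
  by move: (congr1 (fun q : {poly F} => q`_j) pg0); rewrite coefpg coef0 /g !mxE => ->.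
have cop : coprimep p pg.
  rewrite irreducible_poly_coprime //; apply/negP => /(dvdp_leq pg0).
  rewrite sp ltnNge => /negP; apply; exact: spg.
have [[u1 u2] /= Huv] := Bezout_eq1_coprimepP _ _ cop.
have upg : (u2 * pg) %% p = 1.
  have -> : u2 * pg = (- u1) * p + 1 by rewrite -Huv mulNr addKr.
  by rewrite modp_addl_mul_small // size_poly1 sp.
move/negP: s0; apply; apply/eqP/colP => j; rewrite mxE.
move: (key ('X^j * u2)); rewrite -mulrA -modp_mul upg mulr1 modp_small; last first.
  by rewrite size_polyXn sp ltnS ltn_ord.
move=> /(congr1 (fun M : 'M[F]_1 => M 0 0)); rewrite !mxE => <-.
rewrite (bigD1 j) //= mxE coefXn eqxx mul1r big1 ?addr0 // => i ni.
by rewrite mxE coefXn; move: ni; rewrite -val_eqE => /negbTE ->; rewrite mul0r.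
Qed.

End Companion.

Lemma conjc_eqE (R : realType) (z : Cx R) : (complex.conjc z == z) = (complex.Im z == 0).
Proof.
case: z => a b /=; apply/eqP/eqP => [[h]|->]; last by rewrite /complex.conjc oppr0.
by move/eqP: h; rewrite eq_sym -subr_eq0 opprK -mulr2n mulrn_eq0 /= => /eqP.
Qed.

Lemma coef_sumXn (K : nzRingType) d (c : 'I_d -> K) (j : 'I_d) :
  (\sum_(i < d) c i *: 'X^i)`_j = c j.
Proof.
rewrite coef_sum (bigD1 j) //= coefZ coefXn eqxx mulr1 big1 ?addr0 // => i ni.
by rewrite coefZ coefXn; move: ni; rewrite eq_sym -val_eqE => /negbTE ->; rewrite mulr0.
Qed.

Lemma size_sumXn (K : nzRingType) d (c : 'I_d -> K) :
  (size (\sum_(i < d) c i *: 'X^i)%R <= d)%N.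
Proof.
apply/leq_sizeP => j dj; rewrite coef_sum big1 // => i _.
rewrite coefZ coefXn; have -> : (j == i)%N = false.
  by apply/negbTE; rewrite neq_ltn (leq_trans (ltn_ord i) dj) orbT.
by rewrite mulr0.
Qed.

Definition cr (R : realType) (x : R) : Cx R := complex.Complex x 0.

Lemma ReD (R : realType) (x y : Cx R) : complex.Re (x + y) = complex.Re x + complex.Re y.
Proof. by case: x; case: y. Qed.
Lemma ImD (R : realType) (x y : Cx R) : complex.Im (x + y) = complex.Im x + complex.Im y.
Proof. by case: x; case: y. Qed.
Lemma Re_sum (R : realType) (I : finType) (F : I -> Cx R) :
  complex.Re (\sum_i F i) = \sum_i complex.Re (F i).
Proof. exact: (big_morph _ (@ReD R) (erefl _)). Qed.
Lemma Im_sum (R : realType) (I : finType) (F : I -> Cx R) :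
  complex.Im (\sum_i F i) = \sum_i complex.Im (F i).
Proof. exact: (big_morph _ (@ImD R) (erefl _)). Qed.
Lemma Re_crM (R : realType) (a : R) (z : Cx R) : complex.Re (cr a * z) = a * complex.Re z.
Proof. by case: z => c e /=; rewrite mul0r subr0. Qed.
Lemma Im_crM (R : realType) (a : R) (z : Cx R) : complex.Im (cr a * z) = a * complex.Im z.
Proof. by case: z => c e /=; rewrite mul0r addr0. Qed.
Lemma crM (R : realType) (a b : R) : cr a * cr b = cr (a * b).
Proof. by rewrite /cr /=; congr complex.Complex; rewrite ?mul0r ?mulr0 ?subr0 ?addr0. Qed.
Lemma crX (R : realType) (a : R) i : cr a ^+ i = cr (a ^+ i).
Proof. by elim: i => [//|i IH]; rewrite !exprS IH crM. Qed.
Lemma conj_cr (R : realType) (a : R) : complex.conjc (cr a) = cr a.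
Proof. by rewrite /cr /complex.conjc oppr0. Qed.
Lemma complex_eq0 (R : realType) (z : Cx R) : complex.Re z = 0 -> complex.Im z = 0 -> z = 0.
Proof. by case: z => a b /= -> ->. Qed.
Lemma real_cr (R : realType) (z : Cx R) : complex.Im z = 0 -> z = cr (complex.Re z).
Proof. by case: z => a b /= ->. Qed.

Lemma crN (R : realType) (x : R) : cr (- x) = - cr x.
Proof. by apply/eqP; rewrite eq_complex /= oppr0 !eqxx. Qed.

Lemma cr_int (R : realType) (z : int) : cr (z%:~R : R) = z%:~R.
Proof. exact: (rmorph_int (complex.real_complex R) z). Qed.

Lemma pigeon (R : realType) (p q : nat) (P : 'M[R]_(p, q)) (dl : R) :
  (0 < p)%N -> (p < q)%N -> 0 < dl ->
  exists s : 'cV[int]_q, s != 0 /\ forall j, `|(P *m map_mx intr s) j 0| < dl.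
Proof.
move=> p0 pq dl0.
pose A0 : R := 1 + \sum_j \sum_k `|P j k|.
have A0ge1 : 1 <= A0.
  by rewrite lerDl; apply: sumr_ge0 => j _; apply: sumr_ge0 => k _.
have A00 : 0 < A0 by apply: lt_le_trans A0ge1.
pose c0 := (Num.truncn ((A0 + A0) / dl)).+1.
pose N := (c0 ^ p)%N.
pose M' := Num.truncn ((A0 * N%:R + A0 * N%:R) / dl).
pose colr (rr : {ffun 'I_q -> 'I_N.+1}) : 'cV[R]_q := \col_k ((rr k : nat)%:R).
pose v rr j := (P *m colr rr) j 0.
have vb : forall rr j, `|v rr j| <= A0 * N%:R.
  move=> rr j; rewrite /v mxE.
  apply: le_trans (ler_norm_sum _ _ _) _.
  apply: le_trans (_ : \sum_k `|P j k| * N%:R <= _).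
    apply: ler_sum => k _; rewrite normrM mxE ler_wpM2l //.
    by rewrite normr_nat ler_nat; exact: (ltnSE (ltn_ord (rr k))).
  rewrite -mulr_suml ler_wpM2r //.
  apply: le_trans (_ : \sum_j' \sum_k `|P j' k| <= _); last by rewrite lerDr.
  rewrite (bigD1 j) //= lerDl; apply: sumr_ge0 => j' _; apply: sumr_ge0 => k _ //.
pose t rr j := (v rr j + A0 * N%:R) / dl.
have t0 : forall rr j, 0 <= t rr j.
  move=> rr j; apply: divr_ge0; last exact: ltW.
  by move: (vb rr j); rewrite ler_norml => /andP [h _]; rewrite -lerBlDr sub0r.
have tM : forall rr j, (Num.truncn (t rr j) <= M')%N.
  move=> rr j; apply: le_truncn; apply: ler_wpM2r; first by rewrite invr_ge0 ltW.
  by rewrite lerD2r; move: (vb rr j); rewrite ler_norml => /andP [_ h].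
pose F rr : {ffun 'I_p -> 'I_M'.+1} := [ffun j => inord (Num.truncn (t rr j))].
have card_lt : (#|{ffun 'I_p -> 'I_M'.+1}| < #|{ffun 'I_q -> 'I_N.+1}|)%N.
  rewrite !card_ffun !card_ord.
  have hM : (M' <= c0 * N)%N.
    rewrite Num.Theory.truncn_le_nat.
    have -> : (A0 * N%:R + A0 * N%:R) / dl = (A0 + A0) / dl * N%:R by ring.
    apply: le_lt_trans (_ : c0%:R * N%:R < _).
      apply: ler_wpM2r => //; apply: ltW; exact: Num.Theory.truncnS_gt.
    by rewrite -natrM ltr_nat.
  have c01 : (0 < c0)%N by [].
  apply: leq_ltn_trans (_ : (c0 * N.+1) ^ p < N.+1 ^ q)%N.
    by rewrite leq_exp2r //; lia.
  rewrite expnMn -/N.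
  apply: leq_trans (_ : N.+1 ^ p.+1 <= _)%N; last exact: leq_pexp2l.
  by rewrite expnS ltn_pmul2r // expn_gt0.
have : ~~ injectiveb F.
  by apply/negP => /injectiveP /leq_card h; move: card_lt; rewrite ltnNge h.
move=> /injectivePn [rr1 [rr2 ne eF]].
exists (\col_k ((rr1 k : nat)%:Z - (rr2 k : nat)%:Z)); split.
  apply: contra ne => /eqP s0; apply/eqP/ffunP => k; apply/val_inj.
  move: (congr1 (fun M : 'cV[int]_q => M k 0) s0); rewrite !mxE => /eqP.
  by rewrite subr_eq0 eqz_nat => /eqP.
move=> j.
have -> : map_mx intr (\col_k ((rr1 k : nat)%:Z - (rr2 k : nat)%:Z)) = colr rr1 - colr rr2.
  by apply/colP => k; rewrite !mxE rmorphB.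
have tt : Num.truncn (t rr1 j) = Num.truncn (t rr2 j).
  move: (congr1 (fun g : {ffun 'I_p -> 'I_M'.+1} => val (g j)) eF); rewrite !ffunE /= !inordK //; rewrite ltnS; exact: tM.
have e : v rr1 j - v rr2 j = (t rr1 j - t rr2 j) * dl.
  by rewrite /t; field; rewrite gt_eqF.
have -> : (P *m (colr rr1 - colr rr2)) j 0 = v rr1 j - v rr2 j by rewrite mulmxBr /v !mxE.
rewrite e normrM (gtr0_norm dl0) -[X in _ < X]mul1r ltr_pM2r // ltr_norml.
move: (Num.Theory.truncn_itv (t0 rr1 j)) (Num.Theory.truncn_itv (t0 rr2 j)).
rewrite tt => /andP [a1 a2] /andP [b1 b2].
apply/andP; split; lra.
Qed.

Lemma kry_col (R : realType) d (X C : 'M[R]_d) (s : 'cV[R]_d) (k i : 'I_d) :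
  (X *m krylov C s) k i = (X *m iter i (mulmx C) s) k 0.
Proof. by rewrite !mxE; apply: eq_bigr => l _; rewrite !mxE. Qed.

Lemma unit_row (R : realType) d (A : 'M[R]_d) k : A \in unitmx -> exists i, A k i != 0.
Proof.
move=> U; apply/existsP; apply: contraT; rewrite negb_exists => /forallP h.
have : row k (A *m invmx A) = 0.
  rewrite row_mul; have -> : row k A = 0.
    by apply/rowP => i; rewrite !mxE; apply/eqP; move: (h i); rewrite negbK.
  by rewrite mul0mx.
rewrite mulmxV // => /(congr1 (fun M : 'rV[R]_d => M 0 k)); rewrite !mxE eqxx => /eqP.
by rewrite oner_eq0.
Qed.

Lemma open_ball_mx (R : realType) m (O : set 'cV[R]_m) y : open O -> O y ->
  exists2 e : R, 0 < e & forall z : 'cV[R]_m, (forall i j, `|y i j - z i j| < e) -> O z.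
Proof.
move=> oO Oy; have : nbhs y O by apply: open_nbhs_nbhs; split.
move=> /nbhs_ballP [e /= e0 be]; exists e => // z hz; apply: be.
split => // i j.
Qed.

Lemma mxBE (R : realType) p q (A B : 'M[R]_(p, q)) i j : (A - B) i j = A i j - B i j.
Proof. by rewrite !mxE. Qed.

Section Main.
Variables (R : realType) (f : {poly int}) (n m : nat).
Variables (beta : 'I_(n + m) -> Cx R) (Y : 'M[R]_(n + m)).
Variables (r : 'I_(n + m) -> 'I_(n + m)) (im : 'I_(n + m) -> bool).
Hypothesis fmonic : f \is monic.
Hypothesis firr : irreducible_poly (map_poly (fun z : int => z%:~R : rat) f).
Hypothesis n0 : (0 < n)%N.
Hypothesis m0 : (0 < m)%N.
Hypothesis binj : injective beta.
Hypothesis fprod : map_poly (fun z : int => z%:~R : Cx R) f = \prod_(j < n + m) ('X - (beta j)%:P).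
Hypothesis HY : forall (i k : 'I_(n + m)),
  Y i k = (if im k then complex.Im (beta (r k) ^+ i) else complex.Re (beta (r k) ^+ i)).
Hypothesis Hinj : injective (fun k => (r k, im k)).
Hypothesis Him : forall k, im k -> complex.Im (beta (r k)) != 0.
Hypothesis Hconj : forall k k', beta (r k') = complex.conjc (beta (r k)) -> r k' = r k.
Hypothesis Hblock : forall k k', r k = r k' -> (k < n)%N = (k' < n)%N.

Local Notation d := (n + m).
Local Notation fC := (map_poly (fun z : int => z%:~R : Cx R) f).

Lemma sizefC : size fC = d.+1.
Proof. by rewrite fprod size_prod_XsubC -[X in _ = X.+1]card_ord cardE enumT. Qed.

Lemma rootC j : fC.[beta j] = 0.
Proof.
rewrite fprod horner_prod (bigD1 j) //= hornerXsubC subrr mul0r //.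
Qed.

Lemma conj_root j : exists j', beta j' = complex.conjc (beta j).
Proof.
have h : fC.[complex.conjc (beta j)] = 0.
  have -> : fC = map_poly (@complex.conjc R) fC.
    rewrite -map_poly_comp; apply: eq_map_poly => z /=; by rewrite rmorph_int.
  by rewrite horner_map rootC rmorph0.
move: h; rewrite fprod horner_prod => /eqP /prodf_eq0 [j' _].
by rewrite hornerXsubC subr_eq0 => /eqP ->; exists j'.
Qed.


Definition sig j := odflt j [pick j' | beta j' == complex.conjc (beta j)].

Lemma sigE j : beta (sig j) = complex.conjc (beta j).
Proof.
rewrite /sig; case: pickP => [j' /eqP //|h] /=.
by have [j' hj'] := conj_root j; move: (h j'); rewrite hj' eqxx.
Qed.

Lemma sig_inj : injective sig.
Proof. by move=> j1 j2 /(congr1 beta); rewrite !sigE => /(can_inj (@conjcK R)) /binj. Qed.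

Lemma sig_fix j : (sig j == j) = (complex.Im (beta j) == 0).
Proof.
apply/eqP/eqP => [h|h].
  by apply/eqP; rewrite -conjc_eqE -sigE h.
by apply: binj; rewrite sigE; apply/eqP; rewrite conjc_eqE h.
Qed.

Definition gk k := if im k then sig (r k) else r k.

Lemma gk_inj : injective gk.
Proof.
have cross : forall k k', ~~ im k -> im k' -> r k = sig (r k') -> False.
  move=> k k' ik ik' e.
  have e2 : r k = r k' by apply: Hconj; rewrite -sigE e.
  move: (Him ik'); rewrite -sig_fix -e e2 eqxx //.
move=> k k'; rewrite /gk.
case ik: (im k); case ik': (im k') => e.
- apply: Hinj => /=; rewrite ik ik'; congr (_, _); exact: sig_inj.
- by exfalso; apply: (cross k' k) => //; rewrite ik'.
- by exfalso; apply: (cross k k') => //; rewrite ik.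
- by apply: Hinj => /=; rewrite ik ik' e.
Qed.

Lemma gk_onto j : exists k, gk k = j.
Proof.
have [g' g1 g2] := injF_bij gk_inj.
by exists (g' j).
Qed.

Lemma partner k : complex.Im (beta (r k)) != 0 ->
  exists k', [/\ k' != k, r k' = r k & im k' = ~~ im k].
Proof.
move=> nr; case ik: (im k).
- have [k' ek'] := gk_onto (r k); move: ek'; rewrite /gk.
  case ik': (im k') => e.
  + have e2 : r k = r k'.
      by apply: Hconj; rewrite -sigE e.
    have kk : k' = k by apply: Hinj => /=; rewrite ik ik' e2.
    by move: e nr; rewrite kk -sig_fix => ->; rewrite eqxx.
  + exists k'; split => //; apply/eqP => kk; move: ik'; by rewrite kk ik.
- have [k' ek'] := gk_onto (sig (r k)); move: ek'; rewrite /gk.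
  case ik': (im k') => e.
  + exists k'; split => //; first by apply/eqP => kk; move: ik'; rewrite kk ik.
    exact: sig_inj.
  + have e2 : r k' = r k by apply: Hconj; rewrite -sigE e.
    by move: nr; rewrite -sig_fix -e e2 eqxx.
Qed.


Lemma rowY_zero (w : 'rV[R]_d) : w *m Y = 0 -> w = 0.
Proof.
move=> wY.
pose p : {poly Cx R} := \sum_(i < d) cr (w 0 i) *: 'X^i.
have hp x : p.[x] = \sum_(i < d) cr (w 0 i) * x ^+ i.
  by rewrite /p horner_sum; apply: eq_bigr => i _; rewrite hornerZ hornerXn.
have col k : (if im k then complex.Im p.[beta (r k)] else complex.Re p.[beta (r k)]) = 0.
  have := congr1 (fun M : 'M[R]_(1, d) => M 0 k) wY; rewrite !mxE => <-.
  rewrite hp; case ik: (im k).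
  - by rewrite Im_sum; apply: eq_bigr => i _; rewrite HY ik Im_crM.
  - by rewrite Re_sum; apply: eq_bigr => i _; rewrite HY ik Re_crM.
have rk k : p.[beta (r k)] = 0.
  have [nr|rr] := eqVneq (complex.Im (beta (r k))) 0.
  - have ik : im k = false by apply/negbTE/negP => /Him; rewrite nr eqxx.
    move: (col k); rewrite ik => hre; apply: complex_eq0 => //.
    rewrite hp Im_sum big1 // => i _; rewrite (real_cr nr) crX crM //.
  - have [k' [_ e ik']] := partner rr.
    move: (col k) (col k'); rewrite ik' e; case: (im k) => /= h1 h2; exact: complex_eq0.
have rj j : p.[beta j] = 0.
  have [k <-] := gk_onto j; rewrite /gk; case: (im k); last exact: rk.
  rewrite sigE -[RHS](rmorph0 (@complex.conjc R)) -(rk k) !hp rmorph_sum.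
  by apply: eq_bigr => i _; rewrite rmorphM rmorphXn /cr /complex.conjc /= oppr0.
have p0 : p = 0.
  apply/eqP; apply: contraT => pn0.
  have := max_poly_roots pn0 (rs := map beta (enum 'I_d)).
  rewrite size_map size_enum_ord map_inj_uniq // enum_uniq.
  have -> : all (root p) (map beta (enum 'I_d)).
    by apply/allP => x /mapP [j _ ->]; apply/eqP; exact: rj.
  move=> /(_ isT isT) h; move: (size_sumXn (fun i => cr (w 0 i))).
  by rewrite -/p leqNgt h.
apply/rowP => j; rewrite mxE.
by move: (congr1 (fun q : {poly Cx R} => q`_j) p0); rewrite coef_sumXn coef0 => -[].
Qed.

Lemma Yunit : Y \in unitmx.
Proof.
rewrite -row_free_unit -kermx_eq0; apply/eqP/row_matrixP => i; rewrite row0.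
by apply: rowY_zero; rewrite -row_mul mulmx_ker row0.
Qed.

Local Notation fR := (map_poly (fun z : int => z%:~R : R) f).
Local Notation CR := (compmx (n + m) fR).

Lemma sizef : size f = d.+1.
Proof. by rewrite -sizefC size_map_inj_poly //; apply: intr_inj. Qed.

Lemma fd : f`_d = 1.
Proof. by move: fmonic; rewrite monicE /lead_coef sizef => /eqP. Qed.

Lemma compz j (i : 'I_d) :
  \sum_(l < d) cr (CR i l) * beta j ^+ l = beta j ^+ i.+1.
Proof.
have d0 : (0 < d)%N by apply: leq_ltn_trans (ltn_ord i).
case: (eqVneq (i : nat) d.-1) => [id|id].
- under eq_bigr do rewrite mxE id eqxx coef_map /= crN cr_int mulNr.
  rewrite sumrN; have := rootC j; rewrite horner_coef sizefC big_ord_recr /=.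
  rewrite coef_map /= fd mul1r => /eqP; rewrite addr_eq0 => /eqP h.
  have -> : i.+1 = d by rewrite id prednK.
  rewrite -[RHS]opprK -h; congr (- _); apply: eq_bigr => l _; by rewrite coef_map.
- have il : (i.+1 < d)%N.
    by move: (ltn_ord i) id; clear; lia.
  rewrite (bigD1 (Ordinal il)) //= mxE (negbTE id) eqxx /= big1 ?addr0.
    by rewrite /cr mul1r.
  move=> l nl; rewrite mxE (negbTE id).
  have -> : (i.+1 == l)%N = false.
    by apply/negbTE; apply: contra nl => /eqP h; apply/eqP/val_inj.
  by rewrite /cr mul0r.
Qed.

Definition Dm : 'M[R]_d := \matrix_(j, k)
  if j == k then complex.Re (beta (r k))
  else if r j == r k then (if im k then complex.Im (beta (r k)) else - complex.Im (beta (r k)))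
  else 0.

Lemma CY : CR *m Y = Y *m Dm.
Proof.
apply/matrixP => i k; rewrite !mxE.
have -> : \sum_l CR i l * Y l k =
    if im k then complex.Im (beta (r k) ^+ i.+1) else complex.Re (beta (r k) ^+ i.+1).
  rewrite -(compz (r k) i); case ik: (im k); [rewrite Im_sum|rewrite Re_sum];
  by apply: eq_bigr => l _; rewrite HY ik ?Im_crM ?Re_crM.
rewrite (bigD1 k) //= mxE eqxx.
have [nr|rr] := eqVneq (complex.Im (beta (r k))) 0.
- have ik : im k = false by apply/negbTE/negP => /Him; rewrite nr eqxx.
  rewrite big1 => [|j nj]; last first.
    by rewrite mxE (negbTE nj) ik nr oppr0; case: ifP => _; rewrite mulr0.
  rewrite HY ik (real_cr nr) !crX /= exprSr addr0 //.
- have [k' [nk' e ik']] := partner rr.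
  rewrite (bigD1 k') //= mxE (negbTE nk') e eqxx big1 => [|j /andP [njk njk']]; last first.
    rewrite mxE (negbTE njk); case: eqP => [ejk|_]; last by rewrite mulr0.
    exfalso; case: (eqVneq (im j) (im k)) => [ij|ij].
      by move/eqP: njk; apply; apply: Hinj => /=; rewrite ejk ij.
    move/eqP: njk'; apply; apply: Hinj => /=; rewrite ejk e ik'.
    by move: ij; case: (im j); case: (im k).
  rewrite !HY ik' e exprS.
  move: (beta (r k) ^+ i) => z; case: (beta (r k)) => a b; case: z => c g.
  by case: (im k) => /=; ring.
Qed.

Lemma kry_unit (s : 'cV[int]_d) : s != 0 -> krylov CR (map_mx intr s) \in unitmx.
Proof.
move=> s0.
have d0 : (0 < d)%N by apply: leq_trans n0 (leq_addr _ _).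
pose fQ := map_poly (fun z : int => z%:~R : rat) f.
have sQ : size fQ = d.+1 by rewrite size_map_inj_poly ?sizef //; apply: intr_inj.
have mQ : fQ \is monic by rewrite monicE /lead_coef sQ coef_map /= fd.
pose sQv := map_mx (fun z : int => z%:~R : rat) s.
have sQ0 : sQv != 0.
  apply: contra s0 => /eqP h; apply/eqP/colP => k.
  by move: (congr1 (fun M : 'cV[rat]_d => M k 0) h); rewrite !mxE => /eqP; rewrite intr_eq0 => /eqP.
have U := krylov_unit d0 mQ sQ firr sQ0.
rewrite -(map_unitmx (@ratr R)) map_krylov map_compmx in U.
have -> : map_poly (fun z : int => z%:~R : R) f = map_poly ratr fQ.
  by rewrite -map_poly_comp; apply: eq_map_poly => z /=; rewrite ratr_int.
have -> : map_mx (intr : int -> R) s = map_mx ratr sQv.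
  by apply/matrixP => i j; rewrite !mxE ratr_int.
exact: U.
Qed.

Lemma CYiter (x : 'cV[R]_d) i : iter i (mulmx CR) (Y *m x) = Y *m iter i (mulmx Dm) x.
Proof. by elim: i => //= i ->; rewrite mulmxA CY mulmxA. Qed.

Lemma Dm_block j k : Dm j k != 0 -> (j < n)%N = (k < n)%N.
Proof.
rewrite mxE; have [-> //|njk] := eqVneq j k.
have [e _|_] := eqVneq (r j) (r k); first exact: Hblock.
by rewrite eqxx.
Qed.

Lemma Dpres b (v : 'cV[R]_d) : (forall k : 'I_d, (k < n)%N = b -> v k 0 = 0) ->
  forall j : 'I_d, (j < n)%N = b -> (Dm *m v) j 0 = 0.
Proof.
move=> hv j jb; rewrite mxE big1 // => k _.
have [->|nz] := eqVneq (Dm j k) 0; first by rewrite mul0r.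
by rewrite hv ?mulr0 // -(Dm_block nz).
Qed.

Lemma Diter_pres b (v : 'cV[R]_d) i : (forall k : 'I_d, (k < n)%N = b -> v k 0 = 0) ->
  forall j : 'I_d, (j < n)%N = b -> (iter i (mulmx Dm) v) j 0 = 0.
Proof. by move=> hv; elim: i => //= i IH; apply: Dpres. Qed.

Definition K0 := \sum_j \sum_k `|Dm j k|.

Lemma K0_ge0 : 0 <= K0.
Proof. by apply: sumr_ge0 => j _; apply: sumr_ge0. Qed.

Lemma Dbound (w : 'cV[R]_d) e : 0 <= e -> (forall k : 'I_d, (k < n)%N = false -> `|w k 0| <= e) ->
  forall j : 'I_d, (j < n)%N = false -> `|(Dm *m w) j 0| <= K0 * e.
Proof.
move=> e0 hw j jn; rewrite mxE.
apply: le_trans (ler_norm_sum _ _ _) _.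
apply: le_trans (_ : \sum_k `|Dm j k| * e <= _).
  apply: ler_sum => k _; rewrite normrM.
  have [->|nz] := eqVneq (Dm j k) 0; first by rewrite normr0 !mul0r.
  by rewrite ler_wpM2l // hw // -(Dm_block nz).
rewrite -mulr_suml ler_wpM2r //.
rewrite /K0 [X in _ <= X](bigD1 j) //= lerDl; apply: sumr_ge0 => j' _; by apply: sumr_ge0.
Qed.

Lemma Diter_bound (v : 'cV[R]_d) e i : 0 <= e ->
  (forall k : 'I_d, (k < n)%N = false -> `|v k 0| <= e) ->
  forall j : 'I_d, (j < n)%N = false -> `|(iter i (mulmx Dm) v) j 0| <= (K0 + 1) ^+ i * e.
Proof.
move=> e0 hv; elim: i => [|i IH] j jn /=; first by rewrite expr0 mul1r hv.
apply: le_trans (Dbound _ IH jn) _; rewrite ?exprS -?mulrA ?ler_wpM2r ?lerDl //.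
all: by apply: mulr_ge0 => //; apply: exprn_ge0; apply: addr_ge0 => //; exact: K0_ge0.
Qed.

Lemma inj_part b (s : 'cV[int]_d) (k0 : 'I_d) : (k0 < n)%N = b ->
  (forall k : 'I_d, (k < n)%N = b -> (invmx Y *m map_mx intr s) k 0 = 0) -> s = 0.
Proof.
move=> k0b hs; apply/eqP; apply: contraT => s0.
have U := kry_unit s0.
set sR := map_mx intr s in U hs; set x := invmx Y *m sR in hs.
have sx : sR = Y *m x by rewrite /x mulmxA mulmxV ?Yunit ?mul1mx.
have UA : invmx Y *m krylov CR sR \in unitmx by rewrite unitmx_mul unitmx_inv Yunit U.
have [i1] := unit_row k0 UA.
rewrite kry_col sx CYiter mulmxA mulVmx ?Yunit // mul1mx.
by rewrite (Diter_pres _ hs) ?eqxx.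
Qed.

Lemma main_generic : generic_scheme (invmx Y).
Proof.
set W := invmx Y.
have d0 : (0 < d)%N by apply: leq_trans n0 (leq_addr _ _).
split.
- move=> x1 x2; rewrite !in_setE => -[v1 _ <-] [v2 _ <-] e.
  have h : v1 - v2 = 0.
    apply: (@inj_part true _ (lshift m (Ordinal n0))); first by [].
    move=> k kn.
    have hk : k = lshift m (Ordinal kn) by apply: val_inj.
    have ek := congr1 (fun M : 'cV[R]_n => M (Ordinal kn) 0) e; rewrite /= !mxE -hk in ek.
    by rewrite map_mxB mulmxBr mxBE; apply/eqP; rewrite subr_eq0; apply/eqP; rewrite !mxE.
  by move/eqP: h; rewrite subr_eq0 => /eqP ->.
- move=> x1 x2; rewrite !in_setE => -[v1 _ <-] [v2 _ <-] e.
  have h : v1 - v2 = 0.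
    apply: (@inj_part false _ (rshift n (Ordinal m0))); first by rewrite /= addn0 ltnn.
    move=> k kn.
    have kn' : (k - n < m)%N by move: (ltn_ord k) kn; clear; lia.
    have hk : k = rshift n (Ordinal kn') by apply: val_inj => /=; move: kn; clear; lia.
    have ek := congr1 (fun M : 'cV[R]_m => M (Ordinal kn') 0) e; rewrite /= !mxE -hk in ek.
    by rewrite map_mxB mulmxBr mxBE; apply/eqP; rewrite subr_eq0; apply/eqP; rewrite !mxE.
  by move/eqP: h; rewrite subr_eq0 => /eqP ->.
move=> O [y Oy] oO.
have [e e0 be] := open_ball_mx oO Oy.
pose K := K0 + 1.
have K1 : 1 <= K by rewrite lerDr K0_ge0.
have K0' : 0 < K by apply: lt_le_trans K1.
pose dl := e / (2 * d%:R * K ^+ d).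
have den0 : 0 < 2 * d%:R * K ^+ d.
  by rewrite !mulr_gt0 ?ltr0n ?exprn_gt0.
have dl0 : 0 < dl by rewrite divr_gt0.
have md : (m < d)%N by move: n0; clear; lia.
have [s [s0 hs]] := pigeon (dsubmx W) m0 md dl0.
set sR := map_mx intr s in hs.
set x := W *m sR.
have dx : dsubmx x = dsubmx W *m sR by rewrite /x -{1}(vsubmxK W) mul_col_mx col_mxKd.
have hx : forall k : 'I_d, (k < n)%N = false -> `|x k 0| <= dl.
  move=> k kn.
  have kn' : (k - n < m)%N by move: (ltn_ord k) kn; clear; lia.
  have hk : k = rshift n (Ordinal kn') by apply: val_inj => /=; move: kn; clear; lia.
  have := hs (Ordinal kn'); rewrite -dx mxE -hk; exact: ltW.
have Uk := kry_unit s0.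
have sx : sR = Y *m x by rewrite /x mulmxA mulmxV ?Yunit ?mul1mx.
set A := W *m krylov CR sR.
have UA : A \in unitmx by rewrite unitmx_mul unitmx_inv Yunit Uk.
have Aent : forall k l, A k l = (iter l (mulmx Dm) x) k 0.
  by move=> k l; rewrite /A kry_col sx CYiter mulmxA mulVmx ?Yunit // mul1mx.
pose c := invmx A *m col_mx 0 y.
have Ac : A *m c = col_mx 0 y by rewrite mulmxA mulmxV // mul1mx.
pose cf : 'cV[int]_d := \col_i Num.floor (c i 0).
pose CZ := compmx d f.
have mapk : map_mx intr (krylov CZ s *m cf) = krylov CR sR *m map_mx intr cf.
  by rewrite map_mxM map_krylov map_compmx.
set z := W *m map_mx intr (krylov CZ s *m cf).
exists (dsubmx z); split; last by exists z => //; exists (krylov CZ s *m cf).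
apply: be => i j; have -> : j = 0 by apply: ord1.
have -> : y = dsubmx (A *m c) by rewrite Ac col_mxKd.
have -> : z = A *m map_mx intr cf by rewrite /z mapk mulmxA.
rewrite [dsubmx _ i 0]mxE [dsubmx _ i 0]mxE -mxBE -mulmxBr mxE.
set k := rshift n i.
have kn : (k < n)%N = false by rewrite /k /= ltnNge leq_addr.
apply: le_lt_trans (ler_norm_sum _ _ _) _.
apply: le_lt_trans (_ : \sum_(l < d) K ^+ d * dl < e).
  apply: ler_sum => l _; rewrite normrM -[X in _ <= X]mulr1.
  apply: ler_pM => //.
  - rewrite Aent; apply: le_trans (Diter_bound l (ltW dl0) hx kn) _.
    rewrite ler_wpM2r ?(ltW dl0) //; apply: ler_weXn2l => //; exact: ltnW.
  - rewrite mxBE [X in c l 0 - X]mxE [X in c l 0 - X%:~R]mxE.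
    have /andP [f1 f2] := floor_itv (c l 0).
    rewrite intrD in f2.
    rewrite ger0_norm ?subr_ge0 //; lra.
rewrite sumr_const card_ord -mulr_natl.
have -> : d%:R * (K ^+ d * dl) = e / 2.
  rewrite /dl; field; apply/andP; split; first by rewrite expf_neq0 // gt_eqF.
  by rewrite -natrD pnatr_eq0 -lt0n.
lra.
Qed.

End Main.

Theorem theorem1 (R : realType) (f : {poly int}) (n m : nat)
    (beta : 'I_(n + m) -> Cx R) (Y : 'M[R]_(n + m)) :
  f \is monic ->
  irreducible_poly (map_poly (fun z : int => z%:~R : rat) f) ->
  (0 < n)%N -> (0 < m)%N ->
  injective beta ->
  map_poly (fun z : int => z%:~R : Cx R) f = \prod_(j < n + m) ('X - (beta j)%:P) ->
  vandermonde_Y beta Y ->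
  generic_scheme (invmx Y).
Proof.
move=> fm fi n0 m0 bi fp [r [im [HY Hi Him Hc Hb]]].
exact: (main_generic fm fi n0 m0 bi fp HY Hi Him Hc Hb).
Qed.
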